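(* Let $f(x)=\mathbb{E}_\xi f_\xi(x)$ where $f_\xi:\mathbb{R}^d\to\mathbb{R}$ is almost surely convex and $L$-smooth, let $x^*$ be the fixed optimum of the composite problem, and assume $\sigma_*^2:=\mathbb{E}_\xi\|\nabla f_\xi(x^* )-\nabla f(x^* )\|^2<+\infty$. Consider SGD, $v^t=\nabla f_{\xi^t}(x^t)$, where $\xi^t$ is a copy of $\xi$ independent of $x^t$ and of the past, run for at most $t_0$ iterations. Then it satisfies part (a) of the gradient-estimator condition with $\eta_0=\frac1{4L}$, $\omega=1$ and $\mathcal M^t=2\eta^2(t_0-t)\sigma_*^2$ for $t=0,\dots,t_0$. If $f$ is strongly convex and $\sigma_*=0$, it satisfies part (b) with $\eta_0=\frac1{2L}$, $\omega=1$ and $\mathcal M^t=0$.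
   Context: $L$-smoothness: $h(x)\le h(y)+\langle\nabla h(y),x-y\rangle+\frac L2\|x-y\|^2$; $\mu$-strong convexity: $f(x)\ge f(y)+\langle\nabla f(y),x-y\rangle+\frac\mu2\|x-y\|^2$. Bregman divergence $D_f(x,y):=f(x)-f(y)-\langle\nabla f(y),x-y\rangle$. Gradient-estimator condition: with $w^t:=x^t-\eta v^t$, $w^*:=x^*-\eta\nabla f(x^* )$, there are $\eta_0>0$, $\omega>0$ and a nonnegative sequence $\{\mathcal M^t\}$ such that for any $\eta\le\eta_0$ and each $t$: (a) if $f$ is convex, $\mathbb{E}\|w^t-w^*\|^2+\mathcal M^{t+1}\le\mathbb{E}\|x^t-x^*\|^2-\omega\eta\mathbb{E}D_f(x^t,x^* )+\mathcal M^t$; (b) if $f$ is $\mu$-strongly convex, either $\mathcal M^t\equiv0$ or for some $\rho>0$, $\mathbb{E}\|w^t-w^*\|^2+\mathcal M^{t+1}\le(1-\omega\eta\mu)\mathbb{E}\|x^t-x^*\|^2+(1-\rho)\mathcal M^t$. In case (b) with $\mathcal M^t\equiv0$ this reads $\mathbb{E}\|w^t-w^*\|^2\le(1-\omega\eta\mu)\mathbb{E}\|x^t-x^*\|^2$. *)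

(* Defs.v *)
From HB Require Import structures.
From mathcomp Require Import all_boot all_order all_algebra.
From mathcomp Require Import all_classical all_reals all_analysis.
Set Implicit Arguments. Unset Strict Implicit. Unset Printing Implicit Defensive.
Import Order.TTheory GRing.Theory Num.Theory.
Import numFieldNormedType.Exports.
Local Open Scope ring_scope.

Definition dotv (R : realType) (d : nat) (u v : 'rV[R]_d) : R :=
  \sum_(i < d) u ord0 i * v ord0 i.
Definition sqnorm (R : realType) (d : nat) (v : 'rV[R]_d) : R := dotv v v.

Definition gradient_of (R : realType) (d : nat) (h : 'rV[R]_d -> R)
  (g : 'rV[R]_d -> 'rV[R]_d) : Prop :=
  forall x, differentiable h x /\ forall v, 'D_v h x = dotv (g x) v.

Definition convex_fun (R : realType) (d : nat) (h : 'rV[R]_d -> R) : Prop :=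
  forall (x y : 'rV[R]_d) (l : R), 0 <= l <= 1 ->
    h (l *: x + (1 - l) *: y) <= l * h x + (1 - l) * h y.

Definition L_smooth (R : realType) (d : nat) (L : R) (h : 'rV[R]_d -> R)
  (g : 'rV[R]_d -> 'rV[R]_d) : Prop :=
  forall x y, h x <= h y + dotv (g y) (x - y) + L / 2 * sqnorm (x - y).

Definition strongly_convex (R : realType) (d : nat) (mu : R) (h : 'rV[R]_d -> R)
  (g : 'rV[R]_d -> 'rV[R]_d) : Prop :=
  forall x y, h y + dotv (g y) (x - y) + mu / 2 * sqnorm (x - y) <= h x.

Definition bregman (R : realType) (d : nat) (h : 'rV[R]_d -> R)
  (g : 'rV[R]_d -> 'rV[R]_d) (x y : 'rV[R]_d) : R :=
  h x - h y - dotv (g y) (x - y).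

(* Main.v *)
Require Import Defs.
From HB Require Import structures.
From mathcomp Require Import all_boot all_order all_algebra.
From mathcomp Require Import all_classical all_reals all_analysis.
From mathcomp Require Import measurable_realfun.
From mathcomp Require Import ring lra.
Import Order.TTheory GRing.Theory Num.Theory.
Import numFieldNormedType.Exports.
Local Open Scope classical_set_scope.
Local Open Scope ring_scope.

Section nm.
Local Open Scope ereal_scope.
Context d (T : measurableType d) (R : realType) (mu : {measure set T -> \bar R}).
Import HBNNSimple.

Lemma nm_le_integral (f g : T -> \bar R) :
  (forall x, 0 <= f x) -> (forall x, f x <= g x) ->
  \int[mu]_x f x <= \int[mu]_x g x.
Proof.
move=> f0 fg; rewrite !ge0_integralTE//; last by move=> x; exact: le_trans (f0 x) (fg x).
apply: ereal_sup_le => _ [h hf <-]; exists h => //= x.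
exact: le_trans (hf x) (fg x).
Qed.

Lemma nm_integralZ (a : R) (v : T -> \bar R) : (0 <= a)%R ->
  (forall x, 0 <= v x) -> a%:E * \int[mu]_x v x <= \int[mu]_x (a%:E * v x).
Proof.
move=> a0 v0; have [->|ap] := eqVneq a 0%R.
  by rewrite mul0e integral_ge0// => x _; rewrite mul0e.
have a0' : (0 < a)%R by rewrite lt_def ap.
rewrite -lee_pdivlMl// [X in X <= _]ge0_integralTE//.
apply: ge_ereal_sup => _ [k kv <-]; rewrite lee_pdivlMl//.
rewrite -sintegralrM.
rewrite ge0_integralTE; last by move=> x; rewrite mule_ge0.
apply: ereal_sup_ubound => /=.
exists (scale_nnsfun k (ltW a0')) => //= x.
by rewrite /= EFinM lee_pmul2l ?lte_fin.
Qed.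

Lemma nm_integral_superadd (u v w : T -> \bar R) :
  (forall x, 0 <= u x) -> (forall x, 0 <= v x) ->
  (forall x, u x + v x <= w x) ->
  \int[mu]_x u x + \int[mu]_x v x <= \int[mu]_x w x.
Proof.
move=> u0 v0 uvw.
have w0 x : 0 <= w x by apply: le_trans _ (uvw x); rewrite adde_ge0.
rewrite !ge0_integralTE//.
set W := ereal_sup [set sintegral mu h | h in [set h : {nnsfun T >-> R} | forall x, (h x)%:E <= w x]].
have step1 (s k : {nnsfun T >-> R}) : (forall x, (s x)%:E <= u x) ->
    (forall x, (k x)%:E <= v x) -> sintegral mu s + sintegral mu k <= W.
  move=> su kv; rewrite -sintegralD; apply: ereal_sup_ubound.
  exists (add_nnsfun s k) => //= x.
  by rewrite EFinD; apply: le_trans _ (uvw x); exact: leeD.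
have W0 : 0 <= W.
  apply: ereal_sup_ubound; exists nnsfun0; last exact: sintegral0.
  by move=> x /=; rewrite w0.
have [Wy|Wfin] := eqVneq W +oo; first by rewrite Wy leey.
have Wf : W \is a fin_num by rewrite ge0_fin_numE// lt_neqAle Wfin leey.
have step3 (k : {nnsfun T >-> R}) : (forall x, (k x)%:E <= v x) ->
    ereal_sup [set sintegral mu h | h in [set h : {nnsfun T >-> R} | forall x, (h x)%:E <= u x]] + sintegral mu k <= W.
  move=> kv; rewrite -lee_suber_addr//.
  apply: ge_ereal_sup => _ [s su <-] /=.
  by rewrite lee_suber_addr//; exact: step1.
rewrite addeC -lee_suber_addr//.
apply: ge_ereal_sup => _ [k kv <-] /=.
by rewrite lee_suber_addr// addeC; exact: step3.
Qed.

End nm.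

Section lim.
Context (R : realType).

Lemma lim_le_right (q : R -> R) (D C : R) :
  q s @[s --> 0^'] --> D -> (forall s, 0 < s <= 1 -> q s <= C) -> D <= C.
Proof.
move=> /cvg_dnbhs_at_right qD qC.
apply: (closed_cvg (fun r => r <= C) (@closed_le _ C) _ _ qD).
near=> s; apply: qC; apply/andP; split.
  by near: s; exact: nbhs_right_gt.
by near: s; apply: nbhs_right_le; exact: ltr01.
Unshelve. all: by end_near.
Qed.

Variable d : nat.

Lemma first_order (h : 'rV[R]_d -> R) (g : 'rV[R]_d -> 'rV[R]_d) x y :
  convex_fun h -> differentiable h y -> (forall v, 'D_v h y = dotv (g y) v) ->
  h y + dotv (g y) (x - y) <= h x.
Proof.
move=> hc hd hD.
have := @diff_derivable _ _ _ _ _ (x - y) hd.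
rewrite /derivable => /cvg_ex[/= l hl].
have Hl : l = 'D_(x - y) h y.
  by rewrite /derive; apply/esym/cvg_lim => //.
rewrite -hD -Hl -lerBrDl.
apply: (@lim_le_right (fun s => s^-1 *: (h (s *: (x - y) + y) - h y)) l (h x - h y) hl) => s /andP[s0 s1].
rewrite /= /shift.
have := hc x y s; rewrite s1 ltW//= => /(_ isT).
have -> : s *: x + (1 - s) *: y = s *: (x - y) + y.
  by rewrite scalerBl scale1r scalerBr addrA addrAC.
set t := h (s *: (x - y) + y) => H.
rewrite -[X in _ <= X](mulKf (lt0r_neq0 s0) (h x - h y)).
rewrite /GRing.scale/= ler_pM2l ?invr_gt0//.
lra.
Qed.

End lim.

Section dot.
Context (R : realType) (d : nat).
Implicit Types (u v w : 'rV[R]_d).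

Lemma dotvC u v : dotv u v = dotv v u.
Proof. by apply: eq_bigr => i _; rewrite mulrC. Qed.
Lemma dotvDl u v w : dotv (u + v) w = dotv u w + dotv v w.
Proof. by rewrite /dotv -big_split; apply: eq_bigr => i _; rewrite mxE mulrDl. Qed.
Lemma dotvNl u w : dotv (- u) w = - dotv u w.
Proof. by rewrite /dotv -sumrN; apply: eq_bigr => i _; rewrite mxE mulNr. Qed.
Lemma dotvZl k u w : dotv (k *: u) w = k * dotv u w.
Proof. by rewrite /dotv mulr_sumr; apply: eq_bigr => i _; rewrite mxE mulrA. Qed.
Lemma dotvBl u v w : dotv (u - v) w = dotv u w - dotv v w.
Proof. by rewrite dotvDl dotvNl. Qed.
Lemma dotvDr u v w : dotv w (u + v) = dotv w u + dotv w v.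
Proof. by rewrite dotvC dotvDl !(dotvC w). Qed.
Lemma dotvBr u v w : dotv w (u - v) = dotv w u - dotv w v.
Proof. by rewrite dotvC dotvBl !(dotvC w). Qed.
Lemma dotvZr k u w : dotv w (k *: u) = k * dotv w u.
Proof. by rewrite dotvC dotvZl dotvC. Qed.
Lemma dotvNr u w : dotv w (- u) = - dotv w u.
Proof. by rewrite dotvC dotvNl dotvC. Qed.
Lemma sqnorm_ge0 u : 0 <= sqnorm u.
Proof. by apply: sumr_ge0 => i _; rewrite -expr2 sqr_ge0. Qed.
Lemma sqnormB u v : sqnorm (u - v) = sqnorm u - 2 * dotv u v + sqnorm v.
Proof. rewrite /sqnorm !dotvBl !dotvBr (dotvC v u); ring. Qed.
Lemma sqnormD u v : sqnorm (u + v) = sqnorm u + 2 * dotv u v + sqnorm v.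
Proof. rewrite /sqnorm !dotvDl !dotvDr (dotvC v u); ring. Qed.
Lemma sqnormZ k u : sqnorm (k *: u) = k ^+ 2 * sqnorm u.
Proof. rewrite /sqnorm dotvZl dotvZr; ring. Qed.
Lemma sqnormN u : sqnorm (- u) = sqnorm u.
Proof. rewrite /sqnorm dotvNl dotvC dotvNl; ring. Qed.
Lemma sqnormDle u v : sqnorm (u + v) <= 2 * sqnorm u + 2 * sqnorm v.
Proof.
have := sqnorm_ge0 (u - v); rewrite sqnormB sqnormD; lra.
Qed.

Lemma cocoercive (F : 'rV[R]_d -> R) (g : 'rV[R]_d -> 'rV[R]_d) (L : R) x xs :
  0 < L -> (forall z, F x + dotv (g x) (z - x) <= F z) -> L_smooth L F g ->
  sqnorm (g x - g xs) / (2 * L) <= F xs - F x + dotv (g x) (x - xs).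
Proof.
move=> L0 fo sm.
set a := g x; set b := g xs.
pose z := xs - L^-1 *: (b - a).
have h1 := fo z; have h2 := sm z xs.
have e1 : z - x = - (x - xs) - L^-1 *: (b - a).
  by apply/rowP => i; rewrite !mxE; ring.
have e2 : z - xs = - (L^-1 *: (b - a)).
  by apply/rowP => i; rewrite !mxE; ring.
rewrite e1 e2 in h1 h2 => {e1 e2}.
rewrite dotvBr dotvNr dotvZr in h1.
rewrite dotvNr sqnormN dotvZr sqnormZ in h2.
have e3 : sqnorm (a - b) = dotv b (b - a) - dotv a (b - a).
  rewrite /sqnorm !dotvBl !dotvBr (dotvC a b); ring.
rewrite e3.
set A := dotv a (x - xs) in h1 *.
set B := dotv b (b - a) in h2 *.
set C := dotv a (b - a) in h1 *.
have hL : L^-1 ^+ 2 * (L / 2) = L^-1 / 2.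
  by field; rewrite gt_eqF.
have -> : (B - C) / (2 * L) = (B - C) * (L^-1 / 2) by field; rewrite gt_eqF.
have sq : sqnorm (b - a) = B - C.
  rewrite /B /C /sqnorm dotvBl //.
move: h2; rewrite sq mulrA (mulrC (L / 2)) -mulrA mulrA hL.
nra.
Qed.


Lemma core (F : 'rV[R]_d -> R) (g : 'rV[R]_d -> 'rV[R]_d) (L eta : R) x xs c :
  0 < L -> 0 < eta -> eta <= 1 / (2 * L) ->
  (forall z, F x + dotv (g x) (z - x) <= F z) -> L_smooth L F g ->
  sqnorm ((x - eta *: g x) - (xs - eta *: c)) <=
  sqnorm (x - xs) - 2 * eta * (F x - F xs - dotv c (x - xs))
    + 2 * eta ^+ 2 * sqnorm (g xs - c).
Proof.
move=> L0 e0 eL fo sm.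
have H := @cocoercive F g L x xs L0 fo sm.
set a := g x in H *; set b := g xs in H *.
have e : (x - eta *: a) - (xs - eta *: c) = (x - xs) - eta *: ((a - b) + (b - c)).
  by apply/rowP => i; rewrite !mxE; ring.
rewrite e sqnormB sqnormZ dotvZr.
have HS := sqnormDle (a - b) (b - c).
have P0 := sqnorm_ge0 (a - b).
have Q0 := sqnorm_ge0 (b - c).
have e2 : dotv (x - xs) ((a - b) + (b - c)) = dotv a (x - xs) - dotv c (x - xs).
  rewrite dotvC dotvDl !dotvBl; ring.
rewrite e2.
set P := sqnorm (a - b) in H HS P0 *.
set Q := sqnorm (b - c) in HS Q0 *.
set S := sqnorm (a - b + (b - c)) in HS *.
set A := dotv a (x - xs) in H e2 *.
set U := sqnorm (x - xs).
set C := dotv c (x - xs).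
have h1 : eta * P <= P / (2 * L).
  by rewrite mulrC ler_wpM2l// -div1r.
have t1 : eta * (P / (2 * L)) <= eta * (F xs - F x + A) by rewrite ler_wpM2l// ltW.
have t2 : eta ^+ 2 * S <= eta ^+ 2 * (2 * P + 2 * Q) by rewrite ler_wpM2l// sqr_ge0.
have t3 : eta * (eta * P) <= eta * (P / (2 * L)) by rewrite ler_wpM2l// ltW.
nra.
Qed.

End dot.

Section meas.
Context d (T : measurableType d) (R : realType) (n : nat).

Lemma meas_sqnorm (V : T -> 'rV[R]_n) :
  (forall i, measurable_fun setT (fun t => V t ord0 i)) ->
  measurable_fun setT (fun t => sqnorm (V t)).
Proof.
move=> mV; rewrite /sqnorm /dotv; apply: measurable_sum => i.
exact: measurable_funM.
Qed.

Lemma meas_coord_sub (W : T -> 'rV[R]_n) (b : 'rV[R]_n) :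
  (forall i, measurable_fun setT (fun t => W t ord0 i)) ->
  forall i, measurable_fun setT (fun t => (W t - b) ord0 i).
Proof.
move=> mW i.
rewrite (_ : (fun t => _) = (fun t => W t ord0 i - b ord0 i)); last first.
  by apply/funext => t; rewrite !mxE.
by apply: measurable_funB => //; exact: measurable_cst.
Qed.

Lemma meas_coord_lin (W : T -> 'rV[R]_n) (a b : 'rV[R]_n) (k : R) :
  (forall i, measurable_fun setT (fun t => W t ord0 i)) ->
  forall i, measurable_fun setT (fun t => (a - k *: W t - b) ord0 i).
Proof.
move=> mW i.
rewrite (_ : (fun t => _) = (fun t => a ord0 i - k * W t ord0 i - b ord0 i)); last first.
  by apply/funext => t; rewrite !mxE.
apply: measurable_funB; last exact: measurable_cst.
apply: measurable_funB; first exact: measurable_cst.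
by apply: measurable_funM => //; exact: measurable_cst.
Qed.

End meas.

Section intR.
Context d (T : measurableType d) (R : realType) (mu : probability T R).
Implicit Types (f g : T -> R).

Lemma intR_D f g : mu.-integrable setT (EFin \o f) -> mu.-integrable setT (EFin \o g) ->
  mu.-integrable setT (EFin \o (fun x => f x + g x)).
Proof.
move=> hf hg; apply: (eq_integrable _ ((EFin \o f) \+ (EFin \o g))) => //;
  (by move=> x _ /=; rewrite EFinD) || exact: integrableD.
Qed.

Lemma intR_Z k f : mu.-integrable setT (EFin \o f) ->
  mu.-integrable setT (EFin \o (fun x => k * f x)).
Proof.
move=> hf; apply: (eq_integrable _ (fun x => k%:E * (EFin \o f) x)%E) => //;
  (by move=> x _ /=; rewrite EFinM) || exact: integrableZl.
Qed.

Lemma intR_cst k : mu.-integrable setT (EFin \o (fun _ : T => k)).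
Proof. exact: finite_measure_integrable_cst. Qed.

Lemma Rint_Z k f : mu.-integrable setT (EFin \o f) ->
  Rintegral mu setT (fun x => k * f x) = k * Rintegral mu setT f.
Proof. by move=> hf; rewrite RintegralZl. Qed.


Lemma intR_lin a b e k p q s :
  mu.-integrable setT (EFin \o p) -> mu.-integrable setT (EFin \o q) ->
  mu.-integrable setT (EFin \o s) ->
  mu.-integrable setT (EFin \o (fun t => a + b * p t + e * q t + k * s t)).
Proof.
move=> ip iq hs.
apply: intR_D; last exact: intR_Z.
apply: intR_D; last exact: intR_Z.
by apply: intR_D; [exact: intR_cst| exact: intR_Z].
Qed.

Lemma Rint_lin a b e k p q s :
  mu.-integrable setT (EFin \o p) -> mu.-integrable setT (EFin \o q) ->
  mu.-integrable setT (EFin \o s) ->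
  Rintegral mu setT (fun t => a + b * p t + e * q t + k * s t) =
  a + b * Rintegral mu setT p + e * Rintegral mu setT q + k * Rintegral mu setT s.
Proof.
move=> ip iq hs.
rewrite RintegralD//; last exact: intR_Z.
  rewrite RintegralD//; last exact: intR_Z.
    rewrite RintegralD//; last exact: intR_Z.
      have h1 : fine (mu [set: T]) = 1 := congr1 fine (probability_setT mu).
      by rewrite Rintegral_cst// h1 mulr1 !Rint_Z.
    exact: (intR_cst a).
  by apply: intR_D; [exact: intR_cst| exact: intR_Z].
by apply: intR_D; [apply: intR_D; [exact: intR_cst| exact: intR_Z]|exact: intR_Z].
Qed.

Lemma ae_le_Rint f1 f2 : mu.-integrable setT (EFin \o f1) ->
  mu.-integrable setT (EFin \o f2) -> {ae mu, forall x, f1 x <= f2 x} ->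
  Rintegral mu setT f1 <= Rintegral mu setT f2.
Proof.
move=> i1 i2 h12.
rewrite -subr_ge0 -RintegralB//.
have ig : mu.-integrable setT (EFin \o (fun x => f2 x - f1 x)).
  apply: intR_D => //; apply: (eq_integrable _ (EFin \o (fun x => -1 * f1 x))) => //;
    (by move=> x _ /=; rewrite mulN1r) || exact: intR_Z.
have mg : measurable_fun setT (fun x => f2 x - f1 x).
  by apply/measurable_EFinP; exact: (measurable_int mu ig).
rewrite /Rintegral (ae_eq_integral (fun x => (Num.max (f2 x - f1 x) 0)%:E))//.
- by apply: fine_ge0; apply: integral_ge0 => x _; rewrite lee_fin le_max lexx orbT.
- by apply/measurable_EFinP.
- by apply/measurable_EFinP; apply: measurable_maxr => //; exact: measurable_cst.
- apply: filterS h12 => x h _; congr EFin.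
  by apply/esym/max_idPl; rewrite subr_ge0.
Qed.

End intR.

Section inner.
Context (R : realType) (d : nat) (dXi : measure_display) (Xi : measurableType dXi)
  (Q : probability Xi R).
Variables (F : Xi -> 'rV[R]_d -> R) (gF : Xi -> 'rV[R]_d -> 'rV[R]_d) (L : R)
  (xs c : 'rV[R]_d).
Hypothesis L0 : 0 < L.
Hypothesis mF : forall x, measurable_fun setT (fun xi => F xi x).
Hypothesis mg : forall x (i : 'I_d), measurable_fun setT (fun xi => gF xi x ord0 i).
Hypothesis hae : {ae Q, forall xi, convex_fun (F xi) /\ gradient_of (F xi) (gF xi) /\
                    L_smooth L (F xi) (gF xi)}.
Hypothesis intF : forall x, Q.-integrable setT (fun xi => (F xi x)%:E).
Hypothesis sfin : (\int[Q]_xi (sqnorm (gF xi xs - c))%:E < +oo)%E.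

Lemma inner_bound eta x : 0 < eta -> eta <= 1 / (2 * L) ->
  (\int[Q]_xi (sqnorm ((x - eta *: gF xi x) - (xs - eta *: c)))%:E <=
   (sqnorm (x - xs) - 2 * eta * (Rintegral Q setT (fun xi => F xi x)
      - Rintegral Q setT (fun xi => F xi xs) - dotv c (x - xs))
    + 2 * eta ^+ 2 * fine (\int[Q]_xi (sqnorm (gF xi xs - c))%:E))%:E)%E.
Proof.
move=> e0 eL.
pose S xi := sqnorm (gF xi xs - c).
pose U := sqnorm (x - xs). pose C := dotv c (x - xs).
pose r xi := U - 2 * eta * (F xi x - F xi xs - C) + 2 * eta ^+ 2 * S xi.
pose h xi := sqnorm ((x - eta *: gF xi x) - (xs - eta *: c)).
have mS : measurable_fun setT S.
  by apply: meas_sqnorm; apply: meas_coord_sub; exact: mg.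
have iS : Q.-integrable setT (EFin \o S).
  apply/integrableP; split; first exact/measurable_EFinP.
  rewrite (eq_integral (fun xi => (S xi)%:E)); first exact: sfin.
  by move=> xi _ /=; rewrite ?gee0_abs ?lee_fin ?ger0_norm ?sqnorm_ge0.
have rE : r = (fun xi => (U + 2 * eta * C) + (- (2 * eta)) * F xi x + (2 * eta) * F xi xs
                         + (2 * eta ^+ 2) * S xi).
  by apply/funext => xi; rewrite /r; ring.
have ir : Q.-integrable setT (EFin \o r).
  by rewrite rE; apply: intR_lin => //; [exact: (intF x) | exact: (intF xs)].
have Rr : Rintegral Q setT r = U - 2 * eta * (Rintegral Q setT (fun xi => F xi x)
      - Rintegral Q setT (fun xi => F xi xs) - C)
    + 2 * eta ^+ 2 * fine (\int[Q]_xi (sqnorm (gF xi xs - c))%:E).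
  rewrite rE Rint_lin //; [|exact: (intF x) | exact: (intF xs)].
  have -> : Rintegral Q setT S = fine (\int[Q]_xi (sqnorm (gF xi xs - c))%:E) by [].
  ring.
have mr : measurable_fun setT r.
  by apply/measurable_EFinP; exact: (measurable_int Q ir).
have mh : measurable_fun setT h.
  by apply: meas_sqnorm; apply: meas_coord_lin; exact: mg.
have hr : {ae Q, forall xi, h xi <= r xi}.
  apply: filterS hae => xi [cv [gr sm]].
  apply: (@core _ _ (F xi) (gF xi) L eta x xs c L0 e0 eL _ sm).
  move=> z; exact: (@first_order _ _ (F xi) (gF xi) z x cv (gr x).1 (gr x).2).
apply: (@le_trans _ _ (\int[Q]_xi (Num.max (r xi) 0)%:E)%E).
  apply: ae_ge0_le_integral => //.
  - by move=> xi _; rewrite lee_fin sqnorm_ge0.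
  - exact/measurable_EFinP.
  - by move=> xi _; rewrite lee_fin le_max lexx orbT.
  - by apply/measurable_EFinP; apply: measurable_maxr => //; exact: measurable_cst.
  - by apply: filterS hr => xi hx _; rewrite lee_fin le_max hx.
rewrite (ae_eq_integral (fun xi => (r xi)%:E)) //.
- by rewrite -Rr /Rintegral fineK //; exact: integrable_fin_num.
- by apply/measurable_EFinP; apply: measurable_maxr => //; exact: measurable_cst.
- exact/measurable_EFinP.
- apply: filterS hr => xi hx _; congr EFin; apply/max_idPl.
  by apply: le_trans _ hx; exact: sqnorm_ge0.
Qed.

End inner.

Theorem lemma3
  (R : realType) (d : nat)
  (* the law of xi: a probability space (Xi, Q); xi is the identity *)
  (dXi : measure_display) (Xi : measurableType dXi) (Q : probability Xi R)
  (* the probability space carrying the iterate x^t *)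
  (dO : measure_display) (Om : measurableType dO) (P : probability Om R)
  (F : Xi -> 'rV[R]_d -> R) (gF : Xi -> 'rV[R]_d -> 'rV[R]_d)
  (L : R) (t0 : nat) (xstar : 'rV[R]_d) (G : 'rV[R]_d -> 'rV[R]_d) :
  0 < L ->
  (* measurability of xi |-> f_xi(x) and xi |-> grad f_xi(x) *)
  (forall x, measurable_fun setT (fun xi => F xi x)) ->
  (forall x (i : 'I_d), measurable_fun setT (fun xi => gF xi x ord0 i)) ->
  (* almost surely, f_xi is convex, differentiable with gradient gF xi, L-smooth *)
  {ae Q, forall xi, convex_fun (F xi) /\ gradient_of (F xi) (gF xi) /\
                    L_smooth L (F xi) (gF xi)} ->
  (* f(x) = E_xi f_xi(x) is well defined, and G is its gradient *)
  (forall x, Q.-integrable setT (fun xi => (F xi x)%:E)) ->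
  gradient_of (fun x => Rintegral Q setT (fun xi => F xi x)) G ->
  (* sigma_*^2 < +oo *)
  (\int[Q]_xi (sqnorm (gF xi xstar - G xstar))%:E < +oo)%E ->
  let f := fun x => Rintegral Q setT (fun xi => F xi x) in
  let sigma2 := fine (\int[Q]_xi (sqnorm (gF xi xstar - G xstar))%:E) in
  (* E over (x^t, xi^t) with xi^t an independent copy of xi *)
  let Ew := fun (eta : R) (X : Om -> 'rV[R]_d) =>
    (\int[P]_om \int[Q]_xi
        (sqnorm ((X om - eta *: gF xi (X om)) - (xstar - eta *: G xstar)))%:E)%E in
  let Ex := fun (X : Om -> 'rV[R]_d) =>
    (\int[P]_om (sqnorm (X om - xstar))%:E)%E in
  let ED := fun (X : Om -> 'rV[R]_d) =>
    (\int[P]_om (bregman f G (X om) xstar)%:E)%E in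
  let M := fun (eta : R) (t : nat) => 2 * eta ^+ 2 * (t0 - t)%:R * sigma2 in
  (* part (a): eta_0 = 1/(4L), omega = 1, M^t = 2 eta^2 (t0 - t) sigma_*^2 *)
  (forall (eta : R), 0 < eta -> eta <= 1 / (4 * L) ->
   forall (t : nat), (t < t0)%N ->
   forall X : Om -> 'rV[R]_d,
     (forall i : 'I_d, measurable_fun setT (fun om => X om ord0 i)) ->
     (Ex X < +oo)%E ->
     (Ew eta X + (M eta t.+1)%:E <=
        Ex X - (1 * eta)%:E * ED X + (M eta t)%:E)%E)
  /\
  (* part (b): f mu-strongly convex and sigma_* = 0: eta_0 = 1/(2L), omega = 1, M = 0 *)
  (forall mu : R, 0 < mu -> strongly_convex mu f G -> sigma2 = 0 ->
   forall (eta : R), 0 < eta -> eta <= 1 / (2 * L) ->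
   forall X : Om -> 'rV[R]_d,
     (forall i : 'I_d, measurable_fun setT (fun om => X om ord0 i)) ->
     (Ex X < +oo)%E ->
     (Ew eta X <= (1 - 1 * eta * mu)%:E * Ex X)%E).
Proof.
move=> L0 mF mg hae intF gradf sfin f sigma2 Ew Ex ED M.
have fconv : convex_fun f.
  move=> x y l /andP[l0 l1]; rewrite /f.
  have ix := intF x; have iy := intF y.
  have -> : l * Rintegral Q setT (fun xi => F xi x) + (1 - l) * Rintegral Q setT (fun xi => F xi y)
    = Rintegral Q setT (fun xi => 0 + l * F xi x + (1 - l) * F xi y + 0 * F xi x).
    rewrite (@Rint_lin _ _ _ Q 0 l (1 - l) 0 (fun xi => F xi x) (fun xi => F xi y) (fun xi => F xi x)) //.
    ring.
  apply: ae_le_Rint => //.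
  - exact: (intF (l *: x + (1 - l) *: y)).
  - exact: (@intR_lin _ _ _ Q 0 l (1 - l) 0 (fun xi => F xi x) (fun xi => F xi y) (fun xi => F xi x)).
  - apply: filterS hae => xi [cv _].
    have := cv x y l; rewrite l0 l1 => /(_ isT) H; lra.
have fo_f x : f xstar + dotv (G xstar) (x - xstar) <= f x.
  exact: (@first_order _ _ f G x xstar fconv (gradf xstar).1 (gradf xstar).2).
have Dge0 x : 0 <= bregman f G x xstar.
  by rewrite /bregman; have := fo_f x; lra.
have s20 : 0 <= sigma2 by apply: fine_ge0; apply: integral_ge0 => xi _; rewrite lee_fin sqnorm_ge0.
have inner eta x : 0 < eta -> eta <= 1 / (2 * L) ->
  (\int[Q]_xi (sqnorm ((x - eta *: gF xi x) - (xstar - eta *: G xstar)))%:E <=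
   (sqnorm (x - xstar) - 2 * eta * bregman f G x xstar + 2 * eta ^+ 2 * sigma2)%:E)%E.
  by move=> e0 eL; exact: (@inner_bound _ _ _ _ Q F gF L xstar (G xstar) L0 mg hae intF sfin eta x e0 eL).
have Xfacts (X : Om -> 'rV[R]_d) :
    (forall i : 'I_d, measurable_fun setT (fun om => X om ord0 i)) -> (Ex X < +oo)%E ->
    [/\ measurable_fun setT (fun om => sqnorm (X om - xstar)),
       P.-integrable setT (EFin \o (fun om => sqnorm (X om - xstar))) &
       Ex X \is a fin_num].
  move=> mX Exf.
  have mA : measurable_fun setT (fun om => sqnorm (X om - xstar)).
    by apply: meas_sqnorm; exact: meas_coord_sub.
  split => //.
    apply/integrableP; split; first exact/measurable_EFinP.
    rewrite (eq_integral (fun om => (sqnorm (X om - xstar))%:E)); first exact: Exf.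
    by move=> om _ /=; rewrite ?gee0_abs ?lee_fin ?ger0_norm ?sqnorm_ge0.
  by rewrite ge0_fin_numE// integral_ge0// => om _; rewrite lee_fin sqnorm_ge0.
have hin0 eta (x : 'rV[R]_d) :
    (0 <= \int[Q]_xi (sqnorm ((x - eta *: gF xi x) - (xstar - eta *: G xstar)))%:E)%E.
  by apply: integral_ge0 => xi _; rewrite lee_fin sqnorm_ge0.
split; last first.
  move=> mu mu0 sc s0 eta e0 eL X mX Exf.
  have [mA iA Exfin] := Xfacts X mX Exf.
  have hin om : (\int[Q]_xi (sqnorm ((X om - eta *: gF xi (X om)) - (xstar - eta *: G xstar)))%:E
      <= ((1 - 1 * eta * mu) * sqnorm (X om - xstar))%:E)%E.
    apply: le_trans (inner eta (X om) e0 eL) _.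
    rewrite lee_fin s0.
    have := sc (X om) xstar; rewrite /bregman.
    set B := f (X om) - f xstar - dotv (G xstar) (X om - xstar).
    set U := sqnorm (X om - xstar) => h.
    have hB : mu / 2 * U <= B by rewrite /B; lra.
    have := ler_wpM2l (ltW e0) hB.
    nra.
  rewrite /Ew /Ex.
  apply: le_trans (@nm_le_integral _ _ _ P _ _ (fun om => hin0 eta (X om)) hin) _.
  rewrite (eq_integral (fun om => (1 - 1 * eta * mu)%:E * (EFin \o (fun om => sqnorm (X om - xstar))) om)%E); last first.
    by move=> om _ /=; rewrite EFinM.
  by rewrite integralZl.
move=> eta e0 eL t tt0 X mX Exf.
have [mA iA Exfin] := Xfacts X mX Exf.
have eL2 : eta <= 1 / (2 * L).
  have k0 : 0 < 1 / (2 * L) by rewrite divr_gt0// mulr_gt0.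
  have e4 : 1 / (4 * L) = 1 / (2 * L) * (1 / 2).
    by field; rewrite gt_eqF.
  rewrite e4 in eL; lra.
set c := 2 * eta ^+ 2 * sigma2.
have c0 : 0 <= c by rewrite /c mulr_ge0// mulr_ge0// sqr_ge0.
pose hin om := (\int[Q]_xi (sqnorm ((X om - eta *: gF xi (X om)) - (xstar - eta *: G xstar)))%:E)%E.
pose A om := sqnorm (X om - xstar).
pose B om := bregman f G (X om) xstar.
have pw om : (hin om + eta%:E * (B om)%:E <= (A om + c)%:E)%E.
  apply: le_trans (leeD (inner eta (X om) e0 eL2) (lexx _)) _.
  rewrite -EFinM -EFinD lee_fin.
  have := Dge0 (X om); rewrite -/(B om) => hB.
  have : 0 <= eta * B om by rewrite mulr_ge0// ltW.
  rewrite /A /c; nra.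
have super := @nm_integral_superadd _ _ _ P hin (fun om => eta%:E * (B om)%:E)%E
  (fun om => (A om + c)%:E) (fun om => hin0 eta (X om))
  (fun om => mule_ge0 (ltW (e0 : (0 < eta%:E)%E)) (Dge0 (X om) : (0 <= (B om)%:E)%E)) pw.
have scal := @nm_integralZ _ _ _ P eta (fun om => (B om)%:E) (ltW e0) (fun om => Dge0 (X om)).
have intw : (\int[P]_om (A om + c)%:E = Ex X + c%:E)%E.
  rewrite (eq_integral (fun om => ((EFin \o A) \+ (EFin \o (fun _ => c))) om)); last first.
    by move=> om _; rewrite /= EFinD.
  rewrite integralD_EFin //; last exact: intR_cst.
  congr (_ + _)%E.
  have -> : (\int[P]_om (EFin \o (fun _ : Om => c)) om = \int[P]_om (cst c%:E) om)%E by [].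
  transitivity (c%:E * 1)%E; last by rewrite mule1.
  by rewrite integral_cst//; congr (_ * _)%E; exact: probability_setT.
have chain : (Ew eta X + eta%:E * ED X <= Ex X + c%:E)%E.
  rewrite -intw; apply: le_trans _ super; exact: leeD (lexx _) scal.
have Ew0 : (0 <= Ew eta X)%E by apply: integral_ge0 => om _; exact: hin0.
have ED0 : (0 <= ED X)%E by apply: integral_ge0 => om _; rewrite lee_fin Dge0.
have EDfin : ED X \is a fin_num.
  rewrite ge0_fin_numE//.
  have h : (eta%:E * ED X <= Ex X + c%:E)%E := le_trans (lee_paddl Ew0 (lexx _)) chain.
  rewrite -lee_pdivlMl// in h.
  apply: le_lt_trans h _.
  by rewrite -(fineK Exfin) -EFinD -EFinM; exact: ltry.
have Ewfin : Ew eta X \is a fin_num.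
  rewrite ge0_fin_numE//.
  have eD0 : (0 <= eta%:E * ED X)%E by rewrite mule_ge0// lee_fin ltW.
  have h : (Ew eta X <= Ex X + c%:E)%E := le_trans (lee_paddr eD0 (lexx _)) chain.
  apply: le_lt_trans h _.
  by rewrite -(fineK Exfin) -EFinD; exact: ltry.
move: chain; rewrite -(fineK Exfin) -(fineK EDfin) -(fineK Ewfin).
rewrite -EFinM -!EFinD lee_fin => chain.
rewrite lee_fin /M.
have -> : (t0 - t)%:R = (t0 - t.+1)%:R + 1 :> R by rewrite -(subnSK tt0) mulrS addrC.
rewrite /c in chain.
nra.
Qed.
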